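(* For any hypothesis class $\mathcal{H}\subseteq\{0,1\}^{\mathcal{X}}$, as a function of the time horizon $T$, $$\inf_{\mathcal{A}}\operatorname{M}_{\mathcal{A}}(T,\mathcal{H}) = \begin{cases}\Theta(1), & \text{if } \operatorname{W}(\mathcal{H})=1,\\ \Theta(\sqrt{T}), & \text{if } 2\le \operatorname{W}(\mathcal{H})<\infty,\\ \Theta(T), & \text{if } \operatorname{W}(\mathcal{H})=\infty,\end{cases}$$ where the infimum is over all (possibly randomized) online learners operating under apple tasting feedback.
   Context: Online binary classification: over rounds $t=1,\dots,T$, an adversary picks $(x_t,y_t)\in\mathcal{X}\times\{0,1\}$ and reveals $x_t$; the learner $\mathcal{A}$ (possibly randomized) outputs $\hat y_t=\mathcal{A}(x_t)\in\{0,1\}$ based on the history; under apple tasting feedback the learner observes $y_t$ only if $\hat y_t=1$. $\operatorname{M}_{\mathcal{A}}(T,\mathcal{H}) := \sup_{h\in\mathcal{H}}\sup_{x_1,\dots,x_T}\mathbb{E}\bigl[\sum_{t=1}^T \mathbb{1}\{\mathcal{A}(x_t)\neq h(x_t)\}\bigr]$ (labels $y_t=h(x_t)$, expectation over the learner's randomness). AL tree of width $w\in\mathbb{N}=\{1,2,\dots\}$ and depth $d$: a binary string $u$ is an internal node if $|u|<d$ and $u$ has fewer than $w$ ones; the tree assigns $x_u\in\mathcal{X}$ to each internal node. A path is a binary string $\sigma$ whose proper prefixes are all internal nodes but which is not itself one. The tree is shattered by $\mathcal{H}$ if for every path $\sigma$ some $h\in\mathcal{H}$ satisfies $h(x_{(\sigma_1,\dots,\sigma_{i-1})})=\sigma_i$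 for all $i\le|\sigma|$. $\operatorname{AL}_w(\mathcal{H})$ is the largest $d$ such that such a tree of width $w$ and depth $d$ is shattered ($\infty$ if unbounded, $0$ if none). The Effective width $\operatorname{W}(\mathcal{H})$ is the smallest $w\in\mathbb{N}$ with $\operatorname{AL}_w(\mathcal{H})<\infty$, and $\infty$ if none exists. *)

(* Defs.v *)
From HB Require Import structures.
From mathcomp Require Import all_boot all_order all_algebra.
From mathcomp Require Import all_classical all_reals.
Set Implicit Arguments.
Unset Strict Implicit.
Unset Printing Implicit Defensive.
Import Order.TTheory GRing.Theory Num.Theory.
Local Open Scope classical_set_scope.
Local Open Scope ring_scope.

(* A history entry for round s is (x_s, fb_s) with                           *)
(*   fb_s = None    : the learner predicted 0 (label not observed),          *)
(*   fb_s = Some y  : the learner predicted 1 and observed label y.          *)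
(* This records exactly what the learner sees (instances, its own past       *)
(* predictions, and the apple-tasting feedback).                             *)
(* A (possibly randomized) learner is given in behavioural form: from the    *)
(* observed history and the current instance it outputs the probability of   *)
(* predicting 1.                                                             *)

Definition history (X : Type) := seq (X * option bool).

Record learner (R : realType) (X : Type) := Learner {
  lprob :> history X -> X -> R;
  lprob_ge0 : forall hs x, 0 <= lprob hs x;
  lprob_le1 : forall hs x, lprob hs x <= 1
}.

Fixpoint exp_mistakes (R : realType) (X : Type) (A : learner R X)
  (h : X -> bool) (hs : history X) (xs : seq X) : R :=
  match xs with
  | [::] => 0
  | x :: xs' =>
      let p := A hs x in
      p * ((~~ h x)%:R + exp_mistakes A h (rcons hs (x, Some (h x))) xs')
      + (1 - p) * ((h x)%:R + exp_mistakes A h (rcons hs (x, None)) xs')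
  end.

Definition M (R : realType) (X : Type) (A : learner R X)
  (T : nat) (H : set (X -> bool)) : R :=
  sup [set exp_mistakes A h [::] xs | h in H & xs in [set xs : seq X | size xs = T]].

Definition opt_mistakes (R : realType) (X : Type) (H : set (X -> bool))
  (T : nat) : R :=
  inf [set M A T H | A in [set: learner R X]].

Definition internal (w d : nat) (u : seq bool) : bool :=
  (size u < d)%N && (count id u < w)%N.

Definition is_path (w d : nat) (s : seq bool) : Prop :=
  (forall i, (i < size s)%N -> internal w d (take i s)) /\ ~~ internal w d s.

Definition shattered (X : Type) (H : set (X -> bool)) (w d : nat)
  (tr : seq bool -> X) : Prop :=
  forall s, is_path w d s ->
    exists2 h, H h & forall i, (i < size s)%N -> h (tr (take i s)) = nth false s i.

(* AL_w(H) < oo : the depths of shattered width-w AL trees are bounded      *)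
(* (this includes the case where none is shattered, AL_w(H) = 0).           *)
Definition AL_finite (X : Type) (H : set (X -> bool)) (w : nat) : Prop :=
  exists D : nat, forall d : nat,
    (exists tr : seq bool -> X, shattered H w d tr) -> (d <= D)%N.

(* Effective width W(H): Some w = smallest w >= 1 with AL_w(H) < oo,        *)
(* None = oo.                                                                *)
Definition W_pred (X : Type) (H : set (X -> bool)) : pred nat :=
  fun w => `[< (0 < w)%N /\ AL_finite H w >].

Definition eff_width (X : Type) (H : set (X -> bool)) : option nat :=
  match pselect (exists w, W_pred H w) with
  | left ex => Some (ex_minn ex)
  | right _ => None
  end.

Definition bigO1 (R : realType) (f : nat -> R) : Prop :=
  exists C : R, 0 < C /\ exists T0 : nat, forall T, (T0 <= T)%N -> f T <= C.

Definition bigTheta (R : realType) (f g : nat -> R) : Prop :=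
  exists c C : R, [/\ 0 < c, 0 < C &
    exists T0 : nat, forall T, (T0 <= T)%N -> c * g T <= f T <= C * g T].

(* Main.v *)
Require Import Defs.
From HB Require Import structures.
From mathcomp Require Import all_boot all_order all_algebra.
From mathcomp Require Import all_classical all_reals.
From mathcomp Require Import lra zify ring.
Import Order.TTheory GRing.Theory Num.Theory.
Local Open Scope ring_scope.
Set Implicit Arguments.
Unset Strict Implicit.
Unset Printing Implicit Defensive.

Section Cvx.
Variable R : realType.
Lemma cvx_mono (p a a' b b' : R) : 0 <= p <= 1 -> a <= a' -> b <= b' ->
  p * a + (1 - p) * b <= p * a' + (1 - p) * b'.
Proof.
move=> /andP[p0 p1] aa bb; apply: lerD; first exact: ler_wpM2l.
by apply: ler_wpM2l => //; rewrite subr_ge0.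
Qed.
Lemma cvx_le (p a b c : R) : 0 <= p <= 1 -> a <= c -> b <= c ->
  p * a + (1 - p) * b <= c.
Proof.
move=> hp ac bc; apply: le_trans (cvx_mono hp ac bc) _.
by rewrite -mulrDl addrC subrK mul1r.
Qed.
Lemma cvx_ge (p a b c : R) : 0 <= p <= 1 -> c <= a -> c <= b ->
  c <= p * a + (1 - p) * b.
Proof.
move=> hp ac bc; apply: le_trans _ (cvx_mono hp ac bc).
by rewrite -mulrDl addrC subrK mul1r.
Qed.
End Cvx.

Section EM.
Variables (R : realType) (X : Type) (A : learner R X).

Fixpoint emL (hs : history X) (ls : seq (X * bool)) : R :=
  match ls with
  | [::] => 0
  | (x, y) :: ls' => let p := A hs x in
      p * ((~~ y)%:R + emL (rcons hs (x, Some y)) ls')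
      + (1 - p) * (y%:R + emL (rcons hs (x, None)) ls')
  end.

Lemma emE h hs xs : exp_mistakes A h hs xs = emL hs [seq (x, h x) | x <- xs].
Proof. by elim: xs hs => //= x xs IH hs; rewrite !IH. Qed.

Lemma pA hs x : 0 <= A hs x <= 1.
Proof. by rewrite lprob_ge0 lprob_le1. Qed.

Lemma emL_ge0 hs ls : 0 <= emL hs ls.
Proof.
elim: ls hs => [|[x y] ls IH] hs //=.
by apply: cvx_ge; [exact: pA | apply: addr_ge0 | apply: addr_ge0].
Qed.

Lemma emL_le hs ls : emL hs ls <= (size ls)%:R.
Proof.
elim: ls hs => [|[x y] ls IH] hs //=.
rewrite -addn1 natrD [_ + 1]addrC.
apply: cvx_le; [exact: pA| |]; apply: lerD => //; by case: y.
Qed.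

Lemma emL_cat hs l1 l2 : emL hs l1 <= emL hs (l1 ++ l2).
Proof.
elim: l1 hs => [|[x y] ls IH] hs /=; first exact: emL_ge0.
by apply: cvx_mono; [exact: pA | rewrite lerD2l | rewrite lerD2l].
Qed.
End EM.

Local Open Scope classical_set_scope.
Section Plumb.
Variables (R : realType) (X : Type) (H : set (X -> bool)).

Definition Eset (A : learner R X) T : set R :=
  [set exp_mistakes A h [::] xs | h in H & xs in [set xs : seq X | size xs = T]].

Lemma Eset_ub A T : ubound (Eset A T) T%:R.
Proof.
move=> z [h Hh [xs /= sx <-]]; rewrite emE -sx -(size_map (fun x => (x, h x))).
exact: emL_le.
Qed.

Lemma M_ge (A : learner R X) T (c : R) : (exists h, H h /\ exists xs, size xs = T /\ c <= exp_mistakes A h [::] xs) ->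
  c <= M A T H.
Proof.
move=> [h [Hh [xs [sx cle]]]]; apply: le_trans cle _.
apply: sup_upper_bound; last by exists h => //; exists xs.
split; first by exists (exp_mistakes A h [::] xs); exists h => //; exists xs.
by exists T%:R; apply: Eset_ub.
Qed.

Lemma M_le (A : learner R X) T (c : R) : 0 <= c ->
  (forall h xs, H h -> size xs = T -> exp_mistakes A h [::] xs <= c) -> M A T H <= c.
Proof.
move=> c0 hb; rewrite /M.
have [ne|e] := pselect ((Eset A T) !=set0).
  apply: ge_sup => // z [h Hh [xs /= sx <-]]; exact: hb.
rewrite sup_out // => -[]; done.
Qed.

Lemma M_ge0 (A : learner R X) T : 0 <= M A T H.
Proof.
have [[z [h Hh [xs /= sx ez]]]|e] := pselect ((Eset A T) !=set0).
  apply: M_ge; exists h; split => //; exists xs; split => //.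
  by rewrite emE; exact: emL_ge0.
by rewrite /M sup_out // => -[].
Qed.

Definition L0 : learner R X :=
  @Learner R X (fun _ _ => 0) (fun _ _ => lexx 0) (fun _ _ => @ler01 R).

Lemma opt_le (A : learner R X) T (c : R) : M A T H <= c -> opt_mistakes R H T <= c.
Proof.
move=> Mc; apply: le_trans Mc; rewrite /opt_mistakes.
apply: ge_inf; last by exists A.
by exists 0 => z [B _ <-]; exact: M_ge0.
Qed.

Lemma opt_ge T (c : R) : (forall A, c <= M A T H) -> c <= opt_mistakes R H T.
Proof.
move=> hc; apply: lb_le_inf; first by exists (M L0 T H); exists L0.
by move=> z [B _ <-].
Qed.
End Plumb.
Section Trees.
Variables (X : Type).

Lemma take_cat_le (s t : seq bool) i : (i <= size s)%N -> take i (s ++ t) = take i s.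
Proof.
move=> h; rewrite take_cat; case: ltnP => // hi.
have e : i = size s by apply/eqP; rewrite eqn_leq h hi.
by rewrite e subnn take0 cats0 take_size.
Qed.

Lemma ext_path w d s : (forall i, (i < size s)%N -> internal w d (take i s)) ->
  exists t, is_path w d (s ++ t).
Proof.
move: {2}(d - size s)%N (leqnn (d - size s)) => n.
elim: n s => [|n IH] s hn hp.
  exists [::]; rewrite cats0; split => //.
  by rewrite /internal; apply/negP => /andP[h1 _]; lia.
have [hi|hni] := boolP (internal w d s); last by exists [::]; rewrite cats0.
have h1 : (d - size (rcons s false) <= n)%N.
  by move: hi => /andP[h1 _]; rewrite size_rcons; lia.
have h2 : forall i, (i < size (rcons s false))%N -> internal w d (take i (rcons s false)).
  move=> i; rewrite size_rcons ltnS leq_eqVlt => /orP[/eqP ->|hi2].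
    by rewrite -cats1 take_cat ltnn subnn take0 cats0.
  by rewrite -cats1 take_cat hi2; apply: hp.
have [t ht] := IH _ h1 h2.
by exists (false :: t); rewrite -cat_rcons.
Qed.

Lemma sh_prefix (H : set (X -> bool)) w d tr s : shattered H w d tr ->
  (forall i, (i < size s)%N -> internal w d (take i s)) ->
  exists2 h, H h & forall i, (i < size s)%N -> h (tr (take i s)) = nth false s i.
Proof.
move=> sh hp; have [t pt] := ext_path hp.
have [h Hh hh] := sh _ pt; exists h => // i hi.
have := hh i; rewrite size_cat take_cat_le ?(ltnW hi) // nth_cat hi; apply.
exact: leq_trans hi (leq_addr _ _).
Qed.

Definition Sh (H : set (X -> bool)) a d := exists tr, shattered H a d tr.

Lemma Sh_mono_d H a d d' : Sh H a d -> (d' <= d)%N -> Sh H a d'.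
Proof.
move=> [tr sh] le; exists tr => s [hp hn].
apply: sh_prefix sh _ => i hi; have := hp i hi.
by rewrite /internal => /andP[h1 ->]; rewrite andbT; exact: leq_trans h1 le.
Qed.

Lemma Sh_sub (V V' : set (X -> bool)) a d : (forall g, V g -> V' g) -> Sh V a d -> Sh V' a d.
Proof. by move=> sub [tr sh]; exists tr => s ps; have [h Vh hh] := sh s ps; exists h => //; apply: sub. Qed.

Lemma Sh0 V a : Sh V a 0 -> exists h, V h.
Proof.
move=> [tr sh]; have [|h Vh _] := sh [::]; last by exists h.
by split => //; rewrite /internal.
Qed.

Lemma Sh_width0 (x0 : X) (V : set (X -> bool)) h d : V h -> Sh V 0 d.
Proof.
move=> Vh; exists (fun _ => x0) => s [hp hn]; exists h => //.
case: s hp hn => [|b s] hp hn //=.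
by have := hp 0%N isT; rewrite /internal ltn0 andbF.
Qed.

Lemma Sh_depth0 (x0 : X) (V : set (X -> bool)) h a : V h -> Sh V a 0.
Proof.
move=> Vh; exists (fun _ => x0) => s [hp hn]; exists h => //.
case: s hp hn => [|b s] hp hn //=.
by have := hp 0%N isT; rewrite /internal ltn0.
Qed.

Lemma internal_cons w d b u : (0 < w)%N ->
  internal w d.+1 (b :: u) = internal (w - b) d u.
Proof. by move=> w0; rewrite /internal /=; case: b => /=; lia. Qed.

Definition Vres (V : set (X -> bool)) x (y : bool) : set (X -> bool) :=
  fun g => V g /\ g x = y.

Lemma Sh_comb V x a d : (0 < a)%N -> Sh (Vres V x false) a d ->
  Sh (Vres V x true) a.-1 d -> Sh V a d.+1.
Proof.
move=> a0 [tr0 sh0] [tr1 sh1].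
exists (fun u => match u with [::] => x | false :: u' => tr0 u' | true :: u' => tr1 u' end).
move=> [|b s] [hp hn].
  by move: hn; rewrite /internal /= a0.
have hp' : forall i, (i < size s)%N -> internal (a - b) d (take i s).
  move=> i hi; have := hp i.+1; rewrite /= ltnS => /(_ hi).
  by rewrite internal_cons.
have hn' : ~~ internal (a - b) d s by rewrite -internal_cons.
case: b hp hn hp' hn' => hp hn hp' hn'.
  have ps : is_path a.-1 d s.
    split; last by rewrite -subn1.
    by move=> i hi; have := hp' i hi; rewrite subn1.
  have [h [Vh hx] hh] := sh1 s ps.
  exists h => // -[|i] /=; first by [].
  by rewrite ltnS => hi; rewrite hh.
have ps : is_path a d s.
  split; last by rewrite -(subn0 a).
  by move=> i hi; have := hp' i hi; rewrite subn0.
have [h [Vh hx] hh] := sh0 s ps.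
exists h => // -[|i] /=; first by [].
by rewrite ltnS => hi; rewrite hh.
Qed.
End Trees.
Section LowerT.
Variables (R : realType) (X : Type).

Fixpoint bits m : seq (seq bool) :=
  if m is m'.+1 then [seq false :: s | s <- bits m'] ++ [seq true :: s | s <- bits m']
  else [:: [::]].

Lemma size_bits m : size (bits m) = (2 ^ m)%N.
Proof. by elim: m => //= m IH; rewrite size_cat !size_map IH expnS mul2n addnn. Qed.

Lemma bits_size m s : s \in bits m -> size s = m.
Proof.
elim: m s => [|m IH] s /=; first by rewrite inE => /eqP ->.
by rewrite mem_cat => /orP[] /mapP[t /IH <- ->].
Qed.

Fixpoint lab (tr : seq bool -> X) u (sg : seq bool) : seq (X * bool) :=
  if sg is b :: sg' then (tr u, b) :: lab tr (rcons u b) sg' else [::].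

Lemma size_lab tr u sg : size (lab tr u sg) = size sg.
Proof. by elim: sg u => //= b sg IH u; rewrite IH. Qed.

Lemma lab_h tr (h : X -> bool) u sg :
  (forall i, (i < size sg)%N -> h (tr (u ++ take i sg)) = nth false sg i) ->
  [seq (x, h x) | x <- map fst (lab tr u sg)] = lab tr u sg.
Proof.
elim: sg u => //= b sg IH u hh; congr cons.
  by have := hh 0%N isT; rewrite take0 cats0 => ->.
apply: IH => i hi; have := hh i.+1; rewrite ltnS => /(_ hi) /=.
by rewrite -cat_rcons.
Qed.

Lemma sum_cvx (S : Type) (l : seq S) (p a b : R) (f g : S -> R) :
  \sum_(s <- l) (p * (a + f s) + (1 - p) * (b + g s)) =
  p * ((size l)%:R * a + \sum_(s <- l) f s) + (1 - p) * ((size l)%:R * b + \sum_(s <- l) g s).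
Proof.
elim: l => [|s l IH]; first by rewrite !big_nil !mul0r !addr0 !mulr0 addr0.
rewrite !big_cons IH /= -addn1 natrD; ring.
Qed.

Lemma avg_exists (S : Type) (l : seq S) (f : S -> R) (c : R) :
  (0 < size l)%N -> (size l)%:R * c <= \sum_(s <- l) f s ->
  exists2 s, List.In s l & c <= f s.
Proof.
elim: l => [|s l IH] //= _; rewrite big_cons.
have [cf|fc] := leP c (f s); first by exists s => //; left.
case: l IH => [|s' l] IH.
  by rewrite big_nil addr0 mul1r => /(lt_le_trans fc); rewrite ltxx.
move=> hs; have [//| |t tin ct] := IH.
  rewrite -addn1 natrD mulrDl mul1r in hs; lra.
by exists t => //; right.
Qed.

Lemma In_mem (T : eqType) (x : T) l : List.In x l -> x \in l.
Proof. elim: l => //= y l IH [->|/IH h]; rewrite inE ?eqxx //; by rewrite h orbT. Qed.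

Variable A : learner R X.

Lemma sum_lab tr m : forall u hs,
  (2 ^ m)%:R * (m%:R / 2) <= \sum_(s <- bits m) emL A hs (lab tr u s).
Proof.
elim: m => [|m IH] u hs /=; first by rewrite mul0r mulr0 big_cons big_nil; apply: addr_ge0 => //; exact: emL_ge0.
rewrite big_cat !big_map /=.
rewrite (sum_cvx (bits m) (A hs (tr u)) 1 0
   (fun s => emL A (rcons hs (tr u, Some false)) (lab tr (rcons u false) s))
   (fun s => emL A (rcons hs (tr u, None)) (lab tr (rcons u false) s))).
rewrite (sum_cvx (bits m) (A hs (tr u)) 0 1
   (fun s => emL A (rcons hs (tr u, Some true)) (lab tr (rcons u true) s))
   (fun s => emL A (rcons hs (tr u, None)) (lab tr (rcons u true) s))).
rewrite size_bits.
have := IH (rcons u false) (rcons hs (tr u, Some false)).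
have := IH (rcons u false) (rcons hs (tr u, None)).
have := IH (rcons u true) (rcons hs (tr u, Some true)).
have := IH (rcons u true) (rcons hs (tr u, None)).
have /andP[p0 p1] := pA A hs (tr u).
set p := A hs (tr u).
set c := (2 ^ m)%:R * (m%:R / 2).
set F0 := \sum_(s <- _) emL A (rcons hs (tr u, Some false)) _.
set G0 := \sum_(s <- _) emL A (rcons hs (tr u, None)) (lab tr (rcons u false) _).
set F1 := \sum_(s <- _) emL A (rcons hs (tr u, Some true)) _.
set G1 := \sum_(s <- _) emL A (rcons hs (tr u, None)) (lab tr (rcons u true) _).
move=> g1 f1 g0 f0.
have e1 : p * c <= p * F0 by apply: ler_wpM2l.
have e2 : p * c <= p * F1 by apply: ler_wpM2l.
have e3 : (1 - p) * c <= (1 - p) * G0 by apply: ler_wpM2l; rewrite ?subr_ge0.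
have e4 : (1 - p) * c <= (1 - p) * G1 by apply: ler_wpM2l; rewrite ?subr_ge0.
have -> : (2 ^ m.+1)%:R * (m.+1%:R / 2) = (2 ^ m)%:R + 2 * c :> R.
  by rewrite /c expnS natrM -addn1 natrD; field.
rewrite !mulr1 !mulr0 !add0r.
lra.
Qed.

Lemma lowerT (H : set (X -> bool)) T d tr : (T <= d)%N -> shattered H T d tr ->
  (T%:R / 2) <= M A T H.
Proof.
move=> Td sh.
have hsum := sum_lab tr T [::] [::]; rewrite -size_bits in hsum.
have [|s sin hs] := avg_exists (f := fun s => emL A [::] (lab tr [::] s)) _ hsum.
  by rewrite size_bits expn_gt0.
have ssg : size s = T by apply: bits_size; exact: In_mem sin.
rename s into sg.
have hp : forall i, (i < size sg)%N -> internal T d (take i sg).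
  move=> i hi; rewrite /internal size_take hi; apply/andP; split.
  + rewrite ssg in hi; exact: leq_trans hi Td.
  + apply: leq_ltn_trans (count_size _ _) _; rewrite size_take hi.
    by rewrite -ssg.
have [h Hh hh] := sh_prefix sh hp.
apply: M_ge; exists h; split => //; exists (map fst (lab tr [::] sg)).
rewrite size_map size_lab ssg; split => //.
by rewrite emE lab_h.
Qed.
End LowerT.
Section LowerSqrt.
Variables (R : realType) (X : Type) (A : learner R X) (k : nat).
Hypothesis k0 : (0 < k)%N.

Definition blk (c : X) := nseq k (c, false).
Definition Fl (rest : seq X) := flatten (map blk rest).
Fixpoint PPs (rest : seq X) : seq (seq (X * bool)) :=
  if rest is c :: rest' then nseq k (c, true) :: [seq blk c ++ l | l <- PPs rest']
  else [::].

Lemma size_PPs rest : size (PPs rest) = size rest.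
Proof. by elim: rest => //= c rest IH; rewrite size_map IH. Qed.

Let kinv := (k%:R : R)^-1.

Definition T2 rest hs := (size rest)%:R <=
  emL A hs (Fl rest) + kinv * \sum_(l <- PPs rest) emL A hs l.

Definition S2 r c rest hs := r%:R * kinv + (size rest)%:R <=
  emL A hs (nseq r (c, false) ++ Fl rest) +
  kinv * (emL A hs (nseq r (c, true)) + \sum_(l <- PPs rest) emL A hs (nseq r (c, false) ++ l)).

Lemma kinv_ge0 : 0 <= kinv. Proof. by rewrite invr_ge0. Qed.

Lemma S2_of_T2 c rest : (forall hs, T2 rest hs) -> forall r, (r <= k)%N -> forall hs, S2 r c rest hs.
Proof.
move=> hT r; elim: r => [|r IH] rk hs.
  rewrite /S2 /=; have := hT hs; rewrite /T2; lra.
have IHr := IH (ltnW rk).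
rewrite /S2 /=.
rewrite (sum_cvx (PPs rest) (A hs c) 1 0
  (fun l => emL A (rcons hs (c, Some false)) (nseq r (c, false) ++ l))
  (fun l => emL A (rcons hs (c, None)) (nseq r (c, false) ++ l))).
have /andP[p0 p1] := pA A hs c.
have hS := IHr (rcons hs (c, Some false)).
have hN := IHr (rcons hs (c, None)).
rewrite /S2 in hS hN.
move: hS hN.
set p := A hs c.
set ZS := emL A (rcons hs (c, Some false)) _.
set ZN := emL A (rcons hs (c, None)) (nseq r (c, false) ++ _).
set PcS := emL A (rcons hs (c, Some false)) (nseq r (c, true)).
set PcN := emL A (rcons hs (c, None)) (nseq r (c, true)).
set e1 := emL A (rcons hs (c, Some true)) (nseq r (c, true)).
set SaS := \sum_(l <- _) emL A (rcons hs (c, Some false)) _.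
set SbN := \sum_(l <- _) emL A (rcons hs (c, None)) _.
move=> hS hN.
have PcSle : PcS <= r%:R by have := emL_le A (rcons hs (c, Some false)) (nseq r (c, true)); rewrite size_nseq.
have e10 : 0 <= e1 by apply: emL_ge0.
have ki0 := kinv_ge0.
have hk : r.+1%:R * kinv <= 1.
  rewrite /kinv ler_pdivrMr ?ltr0n // mul1r ler_nat //.
have J0 : 0 <= (size (PPs rest))%:R :> R by [].
rewrite size_PPs in J0 *.
set J := (size rest)%:R in hS hN J0 *.
have q0 : 0 <= 1 - p by rewrite subr_ge0.
have m1 : p * (r%:R * kinv + J) <= p * (ZS + kinv * (PcS + SaS)) by apply: ler_wpM2l.
have m2 : (1 - p) * (r%:R * kinv + J) <= (1 - p) * (ZN + kinv * (PcN + SbN)) by apply: ler_wpM2l.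
have m3 : p * (kinv * PcS) <= p * (kinv * r%:R) by apply: ler_wpM2l => //; apply: ler_wpM2l.
have m4 : p * (r.+1%:R * kinv) <= p by rewrite -[X in _ <= X]mulr1; apply: ler_wpM2l.
have m5 : 0 <= kinv * (p * e1) by apply: mulr_ge0 => //; apply: mulr_ge0.
have m6 : 0 <= kinv * (p * J) by apply: mulr_ge0 => //; apply: mulr_ge0.
rewrite -addn1 natrD in m4 *.
rewrite /= !mulr1 !mulr0 !add0r.
nra.
Qed.

Lemma T2_all rest : forall hs, T2 rest hs.
Proof.
elim: rest => [|c rest IH] hs.
  by rewrite /T2 /= big_nil mulr0 addr0.
have := S2_of_T2 c IH (leqnn k) hs.
rewrite /S2 /T2 /= big_cons big_map /Fl /= -/(Fl rest).
have -> : k%:R * kinv = 1 by rewrite /kinv mulfV // pnatr_eq0 -lt0n.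
by rewrite -addn1 natrD addrC.
Qed.

Lemma PPs_char x0 rest l : List.In l (PPs rest) ->
  exists2 j, (j < size rest)%N & l = Fl (take j rest) ++ nseq k (nth x0 rest j, true).
Proof.
elim: rest l => [|c rest IH] l //= [<-|].
  by exists 0%N => //; rewrite take0.
move=> /List.in_map_iff [l' [<- /IH [j js ->]]].
by exists j.+1 => //; rewrite /= catA.
Qed.
End LowerSqrt.
Section LowerSqrt2.
Variables (R : realType) (X : Type).

Fixpoint lab_ok (h : X -> bool) (l : seq (X * bool)) : Prop :=
  if l is e :: l' then h e.1 = e.2 /\ lab_ok h l' else True.

Lemma lab_ok_cat h l1 l2 : lab_ok h l1 -> lab_ok h l2 -> lab_ok h (l1 ++ l2).
Proof. by elim: l1 => //= e l1 IH [he /IH hl] h2; split => //; apply: hl. Qed.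

Lemma lab_ok_nseq h n c y : h c = y -> lab_ok h (nseq n (c, y)).
Proof. by move=> hc; elim: n => //=. Qed.

Lemma lab_ok_Fl k (h : X -> bool) (rest : seq X) : (forall c, List.In c rest -> h c = false) -> lab_ok h (Fl k rest).
Proof.
elim: rest => //= c rest IH hr; apply: lab_ok_cat.
  by apply: lab_ok_nseq; apply: hr; left.
by apply: IH => c' hc'; apply: hr; right.
Qed.

Lemma lab_ok_map h l : lab_ok h l -> [seq (x, h x) | x <- map fst l] = l.
Proof. by elim: l => //= -[x y] l IH [/= -> /IH ->]. Qed.

Lemma size_Fl k (rest : seq X) : size (Fl k rest) = (k * size rest)%N.
Proof. elim: rest => [|c rest IH] /=; first by rewrite muln0. by rewrite size_cat size_nseq IH mulnS. Qed.

Lemma lowerSqrt (H : set (X -> bool)) T k : (0 < k)%N -> (k * k <= T)%N -> ~ AL_finite H 1 ->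
  forall A : learner R X, (k%:R / 2) <= M A T H.
Proof.
move=> k0 kT nAL A.
have [[d [[tr sh] kd]]|nex] := pselect (exists d, (exists tr, shattered H 1 d tr) /\ (k < d)%N); last first.
  exfalso; apply: nAL; exists k => d [tr sh]; rewrite leqNgt; apply/negP => kd.
  by apply: nex; exists d; split => //; exists tr.
pose c i := tr (nseq i false).
pose cs := map c (iota 0 k).
have hint : forall i, (i < d)%N -> internal 1 d (nseq i false).
  by move=> i id; rewrite /internal size_nseq id /= count_nseq.
have [hz Hz hzc] : exists2 hz, H hz & forall i, (i < k)%N -> hz (c i) = false.
  have hp : forall i, (i < size (nseq k false))%N -> internal 1 d (take i (nseq k false)).
    move=> i; rewrite size_nseq => ik; rewrite (@take_nseq _ i k false (ltnW ik)).
    apply: hint; exact: ltn_trans ik kd.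
  have [h Hh hh] := sh_prefix sh hp; exists h => // i ik.
  have := hh i; rewrite size_nseq (@take_nseq _ i k false (ltnW ik)) nth_nseq ik; exact.
have hj : forall j, (j < k)%N -> exists2 h, H h &
    (forall i, (i < j)%N -> h (c i) = false) /\ h (c j) = true.
  move=> j jk.
  have hp : forall i, (i < size (rcons (nseq j false) true))%N ->
      internal 1 d (take i (rcons (nseq j false) true)).
    move=> i; rewrite size_rcons size_nseq ltnS => ij.
    rewrite -cats1 take_cat_le ?size_nseq // (@take_nseq _ i j false ij).
    apply: hint; apply: leq_ltn_trans ij (ltn_trans jk kd).
  have [h Hh hh] := sh_prefix sh hp; exists h => //; split.
    move=> i ij; have := hh i; rewrite size_rcons size_nseq ltnS (ltnW ij) => /(_ isT).
    rewrite -cats1 take_cat_le ?size_nseq ?(ltnW ij) //; rewrite (@take_nseq _ i j false (ltnW ij)).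
    by rewrite nth_cat size_nseq ij nth_nseq ij.
  have := hh j; rewrite size_rcons size_nseq ltnS leqnn => /(_ isT).
  rewrite -cats1 take_cat_le ?size_nseq // (@take_nseq _ j j false (leqnn j)).
  by rewrite nth_cat size_nseq ltnn subnn.
have hT := T2_all A k0 cs [::]; rewrite /T2 size_map size_iota in hT.
have kinvE : k%:R * (k%:R : R)^-1 = 1 by rewrite mulfV // pnatr_eq0 -lt0n.
have kpos : (0 : R) < k%:R by rewrite ltr0n.
have [Zge|Zlt] := leP (k%:R / 2) (emL A [::] (Fl k cs)).
  apply: M_ge; exists hz; split => //.
  exists (map fst (Fl k cs) ++ nseq (T - k * k) (c 0%N)); split.
    by rewrite size_cat size_map size_Fl size_map size_iota size_nseq subnKC.
  rewrite emE map_cat lab_ok_map; last first.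
    apply: lab_ok_Fl => c' /List.in_map_iff [i [<- /In_mem]].
    by rewrite mem_iota add0n => /hzc.
  rewrite map_nseq hzc //; apply: le_trans Zge (emL_cat A _ _ _).
have Sge : (size (PPs k cs))%:R * (k%:R / 2) <= \sum_(l <- PPs k cs) emL A [::] l.
  rewrite size_PPs size_map size_iota.
  set Sm := \sum_(l <- _) _ in hT *.
  have : k%:R / 2 <= (k%:R)^-1 * Sm by lra.
  by move=> h; have := ler_wpM2l (ltW kpos) h; rewrite [X in _ <= X]mulrA kinvE mul1r.
have [|l lin lge] := avg_exists _ Sge.
  by rewrite size_PPs size_map size_iota.
have [j jk el] := PPs_char (c 0%N) lin.
rewrite size_map size_iota in jk.
have [h Hh [hlt hjt]] := hj j jk.
have nthE : nth (c 0%N) cs j = c j by rewrite (nth_map 0%N) ?size_iota // nth_iota.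
have takeE : take j cs = map c (iota 0 j) by rewrite -map_take take_iota (minn_idPl (ltnW jk)).
rewrite nthE takeE in el.
have szl : (size l <= T)%N.
  rewrite el size_cat size_Fl size_map size_iota size_nseq -mulnSr.
  apply: leq_trans kT; exact: leq_mul.
apply: M_ge; exists h; split => //.
exists (map fst l ++ nseq (T - size l) (c j)); split.
  by rewrite size_cat size_map size_nseq subnKC.
rewrite emE map_cat lab_ok_map; last first.
  rewrite el; apply: lab_ok_cat; last exact: lab_ok_nseq.
  apply: lab_ok_Fl => c' /List.in_map_iff [i [<- /In_mem]].
  by rewrite mem_iota add0n => /hlt.
rewrite map_nseq hjt; apply: le_trans lge (emL_cat A _ _ _).
Qed.
End LowerSqrt2.
Section Learn.
Variables (R : realType) (X : Type).

Definition rk (V : set (X -> bool)) (a : nat) : nat :=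
  match pselect (exists d : nat, ~~ `[< Sh V a d >]) with
  | left e => ex_minn e
  | right _ => 0%N
  end.

Lemma rkP V a D : ~ Sh V a D -> forall d, Sh V a d <-> (d < rk V a)%N.
Proof.
move=> nD d; rewrite /rk; case: pselect => [e|ne]; last first.
  by exfalso; apply: ne; exists D; apply/asboolPn.
case: ex_minnP => m /asboolPn Pm minm; split => [Sd|dm].
  rewrite ltnNge; apply/negP => md; apply: Pm; exact: Sh_mono_d Sd md.
have [//|nS] := pselect (Sh V a d).
by have := minm d (introT (asboolPn _) nS); rewrite leqNgt dm.
Qed.

Lemma rk_ub V a D : ~ Sh V a D -> (rk V a <= D)%N.
Proof. by move=> nD; rewrite leqNgt; apply/negP => /(rkP nD D). Qed.

Lemma rk_sub (V V' : set (X -> bool)) a D : (forall g, V' g -> V g) -> ~ Sh V a D ->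
  (rk V' a <= rk V a)%N.
Proof.
move=> sub nD.
have nD' : ~ Sh V' a D by move=> /(Sh_sub sub).
case e: (rk V' a) => [//|r].
have : Sh V' a r by apply/(rkP nD'); rewrite e.
by move=> /(Sh_sub sub) /(rkP nD).
Qed.

Variables (H : set (X -> bool)) (w0 Dm : nat) (eps : R).
Hypothesis eps01 : 0 <= eps <= 1.

Definition case1 V a x := (rk (Vres V x false) a < rk V a)%N.

Definition step (st : set (X -> bool) * nat) (e : X * option bool) :=
  let: (V, a) := st in let: (x, fb) := e in
  match fb with
  | None => (V, a)
  | Some y => if y && ~~ case1 V a x then (Vres V x true, a.-1) else (Vres V x y, a)
  end.

Definition state (hs : history X) := foldl step (H, w0) hs.

Definition lp (hs : history X) (x : X) : R :=
  if case1 (state hs).1 (state hs).2 x then 1 else eps.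

Lemma lp_ge0 hs x : 0 <= lp hs x.
Proof. by rewrite /lp; case: ifP => // _; case/andP: eps01. Qed.
Lemma lp_le1 hs x : lp hs x <= 1.
Proof. by rewrite /lp; case: ifP => // _; case/andP: eps01. Qed.

Definition Lrn : learner R X := Learner lp_ge0 lp_le1.

Variable K : R.
Hypothesis K0 : 0 <= K.
Hypothesis hK : (2 <= w0)%N -> 1 - 2 * eps <= eps * K.

Definition Inv (h : X -> bool) (st : set (X -> bool) * nat) :=
  [/\ st.1 h, (0 < st.2)%N, (st.2 <= w0)%N & ~ Sh st.1 st.2 Dm.+1].

Definition G (st : set (X -> bool) * nat) : R :=
  (st.2.-1)%:R * (K + Dm.+2%:R) + (rk st.1 st.2)%:R.

Lemma state_rcons hs e : state (rcons hs e) = step (state hs) e.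
Proof. by rewrite /state foldl_rcons. Qed.

Lemma upper h xs : forall hs, Inv h (state hs) ->
  exp_mistakes Lrn h hs xs <= G (state hs) + eps * (size xs)%:R.
Proof.
have [e0 e1] := andP eps01.
elim: xs => [|x xs IH] hs.
  case: (state hs) => V a [_ _ _ _] /=; rewrite mulr0 addr0 /G.
  by apply: addr_ge0 => //; apply: mulr_ge0 => //; apply: addr_ge0.
case Est: (state hs) => [V a] [Vh a0 aw nD].
rewrite /= in Vh a0 aw nD.
have hN := IH (rcons hs (x, None)).
rewrite state_rcons Est /= in hN; have {}hN := hN (And4 Vh a0 aw nD).
have hS := IH (rcons hs (x, Some (h x))).
rewrite state_rcons Est /= in hS.
rewrite /= /lp Est /= -addn1 natrD.
set n := (size xs)%:R in hN hS *.
set EN := exp_mistakes _ h (rcons hs (x, None)) xs in hN *.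
set ES := exp_mistakes _ h (rcons hs (x, Some (h x))) xs in hS *.
have r1 : (0 < rk V a)%N by apply/(rkP nD); exact: (@Sh_depth0 _ x V h a Vh).
have rub : (rk V a <= Dm.+1)%N by apply: rk_ub nD.
have sub0 : forall y g, Vres V x y g -> V g by move=> y g [].
have GE : G (V, a) = (a.-1)%:R * (K + Dm.+2%:R) + (rk V a)%:R by [].
case c1: (case1 V a x).
  rewrite (_ : h x && ~~ case1 V a x = false) in hS; last by rewrite c1 andbF.
  have Inv' : Inv h (Vres V x (h x), a).
    rewrite /Inv /=; split => //.
    by move=> /(Sh_sub (sub0 _)).
  have {}hS := hS Inv'.
  rewrite subrr mul0r addr0 mul1r.
  case hx: (h x) in hS *.
  - have le : (rk (Vres V x true) a <= rk V a)%N by exact: rk_sub (sub0 _) nD.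
    move: hS; rewrite /G /= => hS; rewrite /= ?add0r ?GE.
    have : (rk (Vres V x true) a)%:R <= (rk V a)%:R :> R by rewrite ler_nat.
    have : 0 <= eps * 1 by rewrite mulr1.
    lra.
  - move: c1 hS; rewrite /case1 /G /= => c1 hS; rewrite ?GE.
    have : (rk (Vres V x false) a)%:R + 1 <= (rk V a)%:R :> R.
      by rewrite natr1 ler_nat.
    have : 0 <= eps * 1 by rewrite mulr1.
    lra.
case hx: (h x) in hS *.
- rewrite c1 /= in hS.
  have nc : (rk V a <= rk (Vres V x false) a)%N by rewrite leqNgt; move: c1; rewrite /case1 => ->.
  have n1 : ~ Sh (Vres V x true) a.-1 (rk V a).-1.
    move=> S1.
    have S0 : Sh (Vres V x false) a (rk V a).-1.
      have nD0 : ~ Sh (Vres V x false) a Dm.+1 by move=> /(Sh_sub (sub0 _)).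
      apply/(rkP nD0); apply: leq_trans nc; by rewrite prednK.
    have := Sh_comb a0 S0 S1; rewrite prednK // => /(rkP nD); by rewrite ltnn.
  have a2 : (2 <= a)%N.
    case: a a0 aw nD Est n1 {c1 nc GE hS hN r1 rub} => [|[|a']] //= _ _ _ _ n1.
    by exfalso; apply: n1; apply: (Sh_width0 x (h := h)); split.
  have Inv' : Inv h (Vres V x true, a.-1).
    rewrite /Inv /=; split => //=.
    - by rewrite -ltnS prednK.
    - exact: leq_trans (leq_pred a) aw.
    - by move=> S; apply: n1; apply: Sh_mono_d S _; lia.
  have {}hS := hS Inv'.
  have rle : (rk (Vres V x true) a.-1 <= (rk V a).-1)%N by apply: rk_ub n1.
  move: hS; rewrite /G /= => hS; rewrite ?GE /= ?add0r.
  have hk := hK (leq_trans a2 aw).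
  have ea : (a.-1)%:R = (a.-1.-1)%:R + 1 :> R by rewrite natr1; congr (_%:R); lia.
  have er : (rk V a)%:R = ((rk V a).-1)%:R + 1 :> R by rewrite natr1 prednK.
  have rle' : (rk (Vres V x true) a.-1)%:R <= ((rk V a).-1)%:R :> R by rewrite ler_nat.
  rewrite ea er.
  set A1 := (a.-1.-1)%:R in hS *.
  set B := K + Dm.+2%:R in hS *.
  have B0 : K <= B by rewrite /B lerDl.
  have m1 : eps * ES <= eps * (A1 * B + ((rk V a).-1)%:R + eps * n).
    apply: ler_wpM2l => //; apply: le_trans hS _; lra.
  have m2 : (1 - eps) * (1 + EN) <= (1 - eps) * (1 + (A1 + 1) * B + (((rk V a).-1)%:R + 1) + eps * n).
    apply: ler_wpM2l; first lra.
    move: hN; rewrite /G /= ea er -/A1 -/B; lra.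
  have m3 : eps * K <= eps * B by apply: ler_wpM2l.
  nra.
- rewrite /= ?andFb in hS.
  have Inv' : Inv h (Vres V x false, a).
    rewrite /Inv /=; split => //.
    by move=> /(Sh_sub (sub0 _)).
  have {}hS := hS Inv'.
  have le : (rk (Vres V x false) a <= rk V a)%N by exact: rk_sub (sub0 _) nD.
  move: hS; rewrite /G /= => hS; rewrite ?GE /= ?add0r.
  have : (rk (Vres V x false) a)%:R <= (rk V a)%:R :> R by rewrite ler_nat.
  move: hN; rewrite /G /= => hN.
  set Gv := (a.-1)%:R * (K + Dm.+2%:R) + (rk V a)%:R in hN *.
  move=> lr.
  have m1 : eps * (1 + ES) <= eps * (1 + Gv + eps * n).
    apply: ler_wpM2l => //; rewrite -addrA lerD2l; apply: le_trans hS _; rewrite /Gv; lra.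
  have m2 : (1 - eps) * EN <= (1 - eps) * (Gv + eps * n) by apply: ler_wpM2l => //; lra.
  nra.
Qed.
End Learn.
Lemma isqrt T : exists k, (k * k <= T < k.+1 * k.+1)%N.
Proof.
elim: T => [|T [k /andP[h1 h2]]]; first by exists 0%N.
have [le|lt] := leqP (k.+1 * k.+1) T.+1.
  by exists k.+1; apply/andP; split => //; nia.
by exists k; apply/andP; split => //; lia.
Qed.

Section Final.
Variables (R : realType) (X : Type) (H : set (X -> bool)).

Lemma eff_someP w : eff_width H = Some w ->
  [/\ (0 < w)%N, AL_finite H w & forall n, (0 < n)%N -> AL_finite H n -> (w <= n)%N].
Proof.
rewrite /eff_width; case: pselect => // ex [<-].
case: ex_minnP => m /asboolP [m0 Am] minm; split => // n n0 An.
by apply: minm; apply/asboolP.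
Qed.

Lemma eff_noneP : eff_width H = None -> forall w, (0 < w)%N -> ~ AL_finite H w.
Proof.
rewrite /eff_width; case: pselect => // nex _ w w0 Aw.
by apply: nex; exists w; apply/asboolP.
Qed.

Lemma notAL_big a D : ~ AL_finite H a -> exists d tr, (D < d)%N /\ shattered H a d tr.
Proof.
move=> nA; have [//|nex] := pselect (exists d tr, (D < d)%N /\ shattered H a d tr).
exfalso; apply: nA; exists D => d [tr sh]; rewrite leqNgt; apply/negP => Dd.
by apply: nex; exists d, tr.
Qed.

Lemma AL_notSh a : AL_finite H a -> exists D, ~ Sh H a D.+1.
Proof.
move=> [D' hD]; exists D' => -[tr sh].
by have := hD _ (ex_intro _ tr sh); rewrite ltnn.
Qed.

Lemma upper_gen w D (eps K : R) T : 0 <= eps <= 1 -> 0 <= K ->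
  ((2 <= w)%N -> 1 - 2 * eps <= eps * K) -> (0 < w)%N -> ~ Sh H w D.+1 ->
  opt_mistakes R H T <= (w.-1)%:R * (K + D.+2%:R) + D.+1%:R + eps * T%:R.
Proof.
move=> he K0 hK w0 nD.
apply: (opt_le (A := Lrn H w he)).
apply: M_le.
  have e0 : 0 <= eps by case/andP: he.
  apply: addr_ge0; first apply: addr_ge0.
  - apply: mulr_ge0; first exact: ler0n.
    by apply: addr_ge0 => //; exact: ler0n.
  - exact: ler0n.
  - by apply: mulr_ge0 => //; exact: ler0n.
move=> h xs Hh sx.
have := upper (H := H) (w0 := w) (Dm := D) he K0 hK (h := h) xs (hs := [::]) (And4 Hh w0 (leqnn w) nD).
rewrite sx.
move=> le; apply: le_trans le _.
rewrite /G /= lerD2r lerD2l ler_nat.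
exact: rk_ub nD.
Qed.

End Final.
Unset Implicit Arguments.
Theorem corollary1 (R : realType) (X : Type) (H : set (X -> bool)) :
  [/\ eff_width H = Some 1%N -> bigO1 (opt_mistakes R H),
      forall w : nat, eff_width H = Some w -> (2 <= w)%N ->
        bigTheta (opt_mistakes R H) (fun T => Num.sqrt (T%:R : R)) &
      eff_width H = None -> bigTheta (opt_mistakes R H) (fun T => (T%:R : R))].
Proof.
split.
- move=> /eff_someP [_ A1 _].
  have [D nD] := AL_notSh A1.
  exists (D.+1%:R); split; first by rewrite ltr0n.
  exists 0%N => T _.
  have he : 0 <= (0 : R) <= 1 by rewrite lexx ler01.
  have := upper_gen (eps := 0) (K := 0) T he (lexx 0) (fun h : (2 <= 1)%N => False_ind _ (notF h)) isT nD.
  by rewrite /= !mul0r !add0r addr0.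
- move=> w /eff_someP [w0 Aw minw] w2.
  have nA1 : ~ AL_finite H 1 by move=> A1; have := minw 1%N isT A1; lia.
  have [D nD] := AL_notSh Aw.
  exists (1/4), ((w.-1)%:R * (D.+3%:R) + D.+2%:R); split.
  + lra.
  + apply: ltr_wpDl; last by rewrite ltr0n.
    by apply: mulr_ge0; exact: ler0n.
  + exists 1%N => T T1.
    have T0 : (1 : R) <= T%:R by rewrite ler1n.
    set s := Num.sqrt (T%:R : R).
    have s0 : 0 <= s by apply: sqrtr_ge0.
    have s2 : s ^+ 2 = T%:R by apply: sqr_sqrtr; lra.
    have s1 : 1 <= s by nra.
    apply/andP; split.
    * have [k /andP[k1 k2]] := isqrt T.
      have k0 : (0 < k)%N by case: k k1 k2 => //=; lia.
      apply: le_trans (opt_ge (fun A => lowerSqrt k0 k1 nA1 A)).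
      have kk : (T%:R : R) < (k%:R + 1) ^+ 2.
        by rewrite natr1 -natrX ltr_nat expnS expn1.
      have kr : (1 : R) <= k%:R by rewrite ler1n.
      have : s < k%:R + 1 by nra.
      lra.
    * have he : 0 <= s^-1 <= 1.
        by rewrite invr_ge0 s0 /= invr_le1 // ?unitf_gt0 //; lra.
      have hK : (2 <= w)%N -> 1 - 2 * s^-1 <= s^-1 * s.
        move=> _; rewrite mulVf; last by apply/eqP => e; rewrite e in s1; lra.
        have : 0 <= s^-1 by rewrite invr_ge0.
        lra.
      apply: le_trans (upper_gen T he s0 hK w0 nD) _.
      have -> : s^-1 * T%:R = s.
        by rewrite -s2 expr2 mulrA mulVf ?mul1r //; apply/eqP => e; rewrite e in s1; lra.
      have wr : 0 <= (w.-1)%:R :> R by exact: ler0n.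
      have e1 : D.+1%:R = D%:R + 1 :> R by rewrite -addn1 natrD.
      have e2 : D.+2%:R = D%:R + 2 :> R by rewrite -addn2 natrD.
      have e3 : D.+3%:R = D%:R + 3 :> R by rewrite -addn3 natrD.
      rewrite e1 e2 e3.
      have dr : 0 <= D%:R :> R by exact: ler0n.
      have h1 : 0 <= (w.-1)%:R * (D%:R + 2) * (s - 1).
        by apply: mulr_ge0; [apply: mulr_ge0 => //; lra | lra].
      have h2 : 0 <= (D%:R + 1) * (s - 1) by apply: mulr_ge0; lra.
      nra.
- move=> nW.
  have {}nW := eff_noneP nW.
  exists (1/2), 1; split; [lra | lra |].
  exists 1%N => T T1.
  have [d [tr [Td sh]]] := notAL_big T (nW T T1).
  apply/andP; split.
  + apply: le_trans (opt_ge (fun A => lowerT A (ltnW Td) sh)).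
    lra.
  + rewrite mul1r; apply: (opt_le (A := L0 R X)).
    apply: M_le => // h xs Hh sx.
    by rewrite emE -sx -(size_map (fun x => (x, h x))); exact: emL_le.
Qed.
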